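(* Let $\mathcal{P}=\{\xi\in\mathbb{R}^r: C\xi\le d\}$ be a compact polytope with $C\in\mathbb{R}^{q\times r}$ and $d\in\mathbb{R}^q$ with all entries strictly positive, and let $w\in\mathbb{R}^q$ have nonnegative entries with $C^\top\mathrm{diag}(1/d^1,\dots,1/d^q)(\mathds{1}+w)=0$. For $\delta\in(0,\min_i d^i]$ let $\hat{B}_{\mathcal{P}}(\xi)=\sum_{i=1}^q(1+w^i)\big(\hat{B}(-C^i\xi+d^i)+\ln d^i\big)$, where $\hat{B}(z)=-\ln z$ for $z>\delta$ and $\hat{B}(z)=\tfrac12[((z-2\delta)/\delta)^2-1]-\ln\delta$ for $z\le\delta$, and let $\bar{\beta}(\delta):=\min_{i\in\{1,\dots,q\},\,\xi\in\mathbb{R}^r}\{\hat{B}_{\mathcal{P}}(\xi): C^i\xi=d^i\}$. Then $\bar{\beta}(\cdot)$ is a continuous function of $\delta$, and for every such $\delta$ the sublevel set $\{\xi\in\mathbb{R}^r:\hat{B}_{\mathcal{P}}(\xi)\le\bar{\beta}(\delta)\}$ is contained in $\mathcal{P}$.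
   Context: $C^i$ and $d^i$ denote the $i$-th row of $C$ and $i$-th entry of $d$; $\mathds{1}$ is the all-ones vector. The relaxation parameter $\delta$ enters $\hat{B}_{\mathcal{P}}$ through $\hat{B}$. *)

(* Defs.v *)
From HB Require Import structures.
From mathcomp Require Import all_boot all_order all_algebra.
From mathcomp Require Import all_classical all_reals all_analysis.
Set Implicit Arguments. Unset Strict Implicit. Unset Printing Implicit Defensive.
Import Order.TTheory GRing.Theory Num.Theory.
Import numFieldNormedType.Exports.
Local Open Scope classical_set_scope.
Local Open Scope ring_scope.

Definition polytope (R : realType) (q r : nat) (C : 'M[R]_(q, r)) (d : 'cV[R]_q)
  : set 'cV[R]_r := [set xi | forall i : 'I_q, (C *m xi) i 0 <= d i 0].

Definition Bhat (R : realType) (delta z : R) : R :=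
  if delta < z then - ln z
  else 2^-1 * (((z - 2 * delta) / delta) ^+ 2 - 1) - ln delta.

Definition BhatP (R : realType) (q r : nat) (C : 'M[R]_(q, r)) (d w : 'cV[R]_q)
  (delta : R) (xi : 'cV[R]_r) : R :=
  \sum_(i < q) (1 + w i 0) * (Bhat delta (- (C *m xi) i 0 + d i 0) + ln (d i 0)).

Definition betabar (R : realType) (q r : nat) (C : 'M[R]_(q, r)) (d w : 'cV[R]_q)
  (delta : R) : R :=
  inf [set BhatP C d w delta xi | xi in
        [set xi : 'cV[R]_r | exists i : 'I_q, (C *m xi) i 0 = d i 0]].

Definition delta_range (R : realType) (q : nat) (d : 'cV[R]_q) : set R :=
  [set delta | 0 < delta /\ forall i : 'I_q, delta <= d i 0].

(* Main.v *)
Require Import Defs.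
From HB Require Import structures.
From mathcomp Require Import all_boot all_order all_algebra.
From mathcomp Require Import all_classical all_reals all_analysis.
From mathcomp Require Import ring lra.
Import Order.TTheory GRing.Theory Num.Theory.
Import numFieldNormedType.Exports.
Local Open Scope classical_set_scope.
Local Open Scope ring_scope.


Lemma ln_tan_lt (R : realType) (a b : R) : 0 < a -> 0 < b -> a != b -> ln b - ln a < b / a - 1.
Proof.
move=> a0 b0 ab.
have x0 : 0 < b / a by rewrite divr_gt0.
rewrite -ln_div ?posrE //.
have u0 : ln (b / a) != 0.
  apply/eqP => h.
  have : expR (ln (b / a)) = b / a by rewrite lnK ?posrE.
  rewrite h expR0 => ba.
  have : b = (b / a) * a by rewrite divfK ?gt_eqF.
  by rewrite -ba mul1r => ba'; move: ab; rewrite ba' eqxx.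
have := expR_gt1Dx u0; rewrite lnK ?posrE //; lra.
Qed.

Lemma ln_tan_le (R : realType) (a b : R) : 0 < a -> 0 < b -> ln b - ln a <= b / a - 1.
Proof.
move=> a0 b0; have [->|ab] := eqVneq a b.
  by rewrite subrr divff ?gt_eqF // subrr.
by apply/ltW/ln_tan_lt.
Qed.


Definition slope (R : realType) (delta y : R) := if delta < y then - y^-1 else (y - 2 * delta) / delta ^+ 2.

Arguments slope {R}.

Lemma supp_lt (R : realType) (delta y z : R) : 0 < delta -> z != y ->
  Bhat delta y + slope delta y * (z - y) < Bhat delta z.
Proof.
move=> d0 zy.
have dn : delta != 0 by rewrite gt_eqF.
have zy2 : 0 < (z - y) ^+ 2 by rewrite exprn_even_gt0 //= subr_eq0.
rewrite /Bhat /slope; case: ifP => hy; case: ifP => hz.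
- have y0 : 0 < y by apply: lt_trans hy.
  have z0 : 0 < z by apply: lt_trans hz.
  have := @ln_tan_lt _ y z y0 z0 ltac:(by rewrite eq_sym).
  have -> : - y^-1 * (z - y) = - (z / y - 1) by field; rewrite gt_eqF.
  lra.
- move/negbT: hz; rewrite -leNgt => hz.
  have y0 : 0 < y by apply: lt_trans hy.
  have yd : y != delta by rewrite gt_eqF.
  have := @ln_tan_lt _ y delta y0 d0 yd.
  have E : 2^-1 * (((z - 2 * delta) / delta) ^+ 2 - 1) - ln delta
     - (- ln y + - y^-1 * (z - y)) + (ln delta - ln y - (delta / y - 1))
     = (z - delta) * (delta - y) / (y * delta) + (z - delta) ^+ 2 / (2 * delta ^+ 2).
    by field; rewrite ?gt_eqF ?mulr_gt0.
  have A : 0 <= (z - delta) * (delta - y) / (y * delta).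
    have -> : (z - delta) * (delta - y) = (delta - z) * (y - delta) by ring.
    apply: divr_ge0; last by apply/ltW/mulr_gt0.
    by apply: mulr_ge0; rewrite subr_ge0 // ltW.
  have B : 0 <= (z - delta) ^+ 2 / (2 * delta ^+ 2) by rewrite divr_ge0 ?sqr_ge0 ?mulr_ge0 ?ltW.
  lra.
- move/negbT: hy; rewrite -leNgt => hy.
  have z0 : 0 < z by apply: lt_trans hz.
  have := @ln_tan_lt _ delta z d0 z0 (negbT (lt_eqF hz)).
  have E : - (z / delta - 1) - (2^-1 * (((y - 2 * delta) / delta) ^+ 2 - 1)
        + (y - 2 * delta) / delta ^+ 2 * (z - y))
     = (delta - y) ^+ 2 / (2 * delta ^+ 2) + (delta - y) * (z - delta) / delta ^+ 2.
    by field.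
  have A : 0 <= (delta - y) * (z - delta) / delta ^+ 2.
    by apply: divr_ge0; [apply: mulr_ge0; rewrite subr_ge0 // ; exact: ltW | exact: sqr_ge0].
  have B : 0 <= (delta - y) ^+ 2 / (2 * delta ^+ 2) by rewrite divr_ge0 ?sqr_ge0 ?mulr_ge0 ?ltW.
  lra.
- have E : 2^-1 * (((z - 2 * delta) / delta) ^+ 2 - 1) - ln delta
     - (2^-1 * (((y - 2 * delta) / delta) ^+ 2 - 1) - ln delta
        + (y - 2 * delta) / delta ^+ 2 * (z - y))
     = (z - y) ^+ 2 / (2 * delta ^+ 2).
    by field.
  have B : 0 < (z - y) ^+ 2 / (2 * delta ^+ 2) by apply: divr_gt0 => //; apply: mulr_gt0 => //; exact: exprn_gt0.
  lra.
Qed.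

Lemma supp_le (R : realType) (delta y z : R) : 0 < delta ->
  Bhat delta y + slope delta y * (z - y) <= Bhat delta z.
Proof.
move=> d0; have [->|zy] := eqVneq z y; first by rewrite subrr mulr0 addr0.
exact/ltW/supp_lt.
Qed.


Lemma conv_lt (R : realType) (delta t z x : R) : 0 < delta -> 0 < t -> t < 1 -> z != x ->
  Bhat delta (t * z + (1 - t) * x) < t * Bhat delta z + (1 - t) * Bhat delta x.
Proof.
move=> d0 t0 t1 zx.
set y := t * z + (1 - t) * x.
have Ezy : z - y = (1 - t) * (z - x) by rewrite /y; ring.
have zy : z != y.
  by rewrite -subr_eq0 Ezy mulf_neq0 // ?subr_eq0 // gt_eqF // subr_gt0.
have H1 := @supp_lt _ delta y z d0 zy.
have H2 := @supp_le _ delta y x d0.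
set s := slope delta y in H1 H2.
have E : t * (Bhat delta z - (Bhat delta y + s * (z - y)))
       + (1 - t) * (Bhat delta x - (Bhat delta y + s * (x - y)))
       = t * Bhat delta z + (1 - t) * Bhat delta x - Bhat delta y by rewrite /y; ring.
have A : 0 < t * (Bhat delta z - (Bhat delta y + s * (z - y))) by rewrite mulr_gt0 // subr_gt0.
have B : 0 <= (1 - t) * (Bhat delta x - (Bhat delta y + s * (x - y))).
  by apply: mulr_ge0; rewrite subr_ge0 //; exact: ltW.
lra.
Qed.


Lemma sum_zero (R : realType) (q r : nat) (C : 'M[R]_(q, r)) (d w : 'cV[R]_q) :
  C^T *m diag_mx (\row_i (d i 0)^-1) *m (const_mx 1 + w) = 0 ->
  forall xi : 'cV[R]_r, \sum_(i < q) (1 + w i 0) * ((C *m xi) i 0 / d i 0) = 0.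
Proof.
move=> H xi; have := congr1 (fun M => (xi^T *m M) 0 0) H => /=.
rewrite mulmx0 !mulmxA -trmx_mul mul_mx_diag => H2.
rewrite mxE [RHS]mxE in H2; apply: etrans H2.
apply: eq_bigr => i _; rewrite !mxE; ring.

Qed.

Lemma mulC_scale (R : realType) (q r : nat) (C : 'M[R]_(q, r)) (t : R) (xi : 'cV[R]_r) (i : 'I_q) :
  (C *m (t *: xi)) i 0 = t * (C *m xi) i 0.
Proof. by rewrite -scalemxAr mxE. Qed.

Lemma slope_d (R : realType) (delta y : R) : 0 < delta -> delta <= y -> slope delta y = - y^-1.
Proof.
move=> d0 dy; rewrite /slope; case: ifP => // /negbT; rewrite -leNgt => h.
have -> : y = delta by apply: le_anti; rewrite h dy.
by field; rewrite gt_eqF.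
Qed.

Lemma glob_min (R : realType) (q r : nat) (C : 'M[R]_(q, r)) (d w : 'cV[R]_q) (delta : R)
  (xi : 'cV[R]_r) :
  (forall i, 0 < d i 0) -> (forall i, 0 <= w i 0) -> 0 < delta -> (forall i, delta <= d i 0) ->
  C^T *m diag_mx (\row_i (d i 0)^-1) *m (const_mx 1 + w) = 0 ->
  BhatP C d w delta 0 <= BhatP C d w delta xi.
Proof.
move=> dp wp d0 dd H.
have S := @sum_zero _ _ _ _ _ _ H xi.
apply: (@le_trans _ _ (BhatP C d w delta 0 + \sum_(i < q) (1 + w i 0) * ((C *m xi) i 0 / d i 0))).
  by rewrite S addr0.
rewrite /BhatP -big_split /=.
apply: ler_sum => i _.
rewrite mulmx0 mxE oppr0 add0r -mulrDr.
apply: ler_wpM2l; first by rewrite addr_ge0.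
have := @supp_le _ delta (d i 0) (- (C *m xi) i 0 + d i 0) d0.
rewrite slope_d //.
have -> : - (d i 0)^-1 * (- (C *m xi) i 0 + d i 0 - d i 0) = (C *m xi) i 0 / d i 0.
  by field; rewrite gt_eqF.
lra.
Qed.

Lemma mul0_entry (R : realType) (q r : nat) (C : 'M[R]_(q, r)) (i : 'I_q) :
  (C *m (0 : 'cV[R]_r)) i 0 = 0.
Proof. by rewrite mulmx0 mxE. Qed.

Lemma conv_le (R : realType) (delta t z x : R) : 0 < delta -> 0 < t -> t < 1 ->
  Bhat delta (t * z + (1 - t) * x) <= t * Bhat delta z + (1 - t) * Bhat delta x.
Proof.
move=> d0 t0 t1; have [->|zx] := eqVneq z x; last exact/ltW/conv_lt.
have -> : t * x + (1 - t) * x = x by ring.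
by rewrite le_eqVlt; apply/orP; left; apply/eqP; ring.
Qed.

Lemma term_le (R : realType) (delta t a c dd L : R) : 0 < delta -> 0 < t -> t < 1 -> 0 <= a ->
  a * (Bhat delta (- (t * c) + dd) + L) <=
  t * (a * (Bhat delta (- c + dd) + L)) + (1 - t) * (a * (Bhat delta dd + L)).
Proof.
move=> d0 t0 t1 a0.
have -> : - (t * c) + dd = t * (- c + dd) + (1 - t) * dd by ring.
have -> : t * (a * (Bhat delta (- c + dd) + L)) + (1 - t) * (a * (Bhat delta dd + L))
  = a * (t * Bhat delta (- c + dd) + (1 - t) * Bhat delta dd + L) by ring.
by rewrite ler_wpM2l // lerD2r conv_le.
Qed.

Lemma term_lt (R : realType) (delta t a c dd L : R) : 0 < delta -> 0 < t -> t < 1 -> 0 < a ->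
  c != 0 ->
  a * (Bhat delta (- (t * c) + dd) + L) <
  t * (a * (Bhat delta (- c + dd) + L)) + (1 - t) * (a * (Bhat delta dd + L)).
Proof.
move=> d0 t0 t1 a0 c0.
have -> : - (t * c) + dd = t * (- c + dd) + (1 - t) * dd by ring.
have -> : t * (a * (Bhat delta (- c + dd) + L)) + (1 - t) * (a * (Bhat delta dd + L))
  = a * (t * Bhat delta (- c + dd) + (1 - t) * Bhat delta dd + L) by ring.
rewrite ltr_pM2l // ltrD2r conv_lt //.
by rewrite -subr_eq0 addrK oppr_eq0.
Qed.

Lemma core (R : realType) (q r : nat) (C : 'M[R]_(q, r)) (d w : 'cV[R]_q) (delta : R)
  (xi : 'cV[R]_r) :
  (forall i, 0 < d i 0) -> (forall i, 0 <= w i 0) -> 0 < delta -> (forall i, delta <= d i 0) ->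
  C^T *m diag_mx (\row_i (d i 0)^-1) *m (const_mx 1 + w) = 0 ->
  ~ polytope C d xi ->
  exists eta : 'cV[R]_r, (exists j, (C *m eta) j 0 = d j 0) /\ polytope C d eta /\
    BhatP C d w delta eta < BhatP C d w delta xi.
Proof.
move=> dp wp d0 dd H nP.
pose c := fun i => (C *m xi) i 0.
have [i0 hi0] : exists i, d i 0 < c i.
  have [i hi] : exists i, ~ ((C *m xi) i 0 <= d i 0) by apply/existsNP; exact: nP.
  by exists i; rewrite ltNge; apply/negP.
have ci0 : 0 < c i0 := lt_trans (dp i0) hi0.
case: (@arg_minP _ R 'I_q i0 (fun i => 0 < c i) (fun i => d i 0 / c i) ci0) => j cj jmin.
pose t := d j 0 / c j.
have t0 : 0 < t by rewrite divr_gt0.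
have t1 : t < 1.
  apply: (le_lt_trans (jmin i0 ci0)).
  by rewrite ltr_pdivrMr // mul1r.
exists (t *: xi); split.
  by exists j; rewrite mulC_scale /t divfK // gt_eqF.
split.
  move=> k; rewrite mulC_scale; case: (ltP 0 (c k)) => ck.
    by rewrite -ler_pdivlMr //; exact: jmin.
  have := mulr_ge0_le0 (ltW t0) ck; have := dp k; rewrite /c; lra.
have G := @glob_min _ _ _ C d w delta (t *: xi) dp wp d0 dd H.
have K : BhatP C d w delta (t *: xi) <
   t * BhatP C d w delta xi + (1 - t) * BhatP C d w delta 0.
  rewrite /BhatP !mulr_sumr -big_split /=.
  rewrite (bigD1 i0) //= [X in _ < X](bigD1 i0) //=.
  apply: ltr_leD.
    rewrite mulC_scale mul0_entry oppr0 add0r.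
    apply: term_lt => //; first by rewrite ltr_pwDl.
    by rewrite gt_eqF.
  apply: ler_sum => i _.
  rewrite mulC_scale mul0_entry oppr0 add0r.
  by apply: term_le => //; rewrite addr_ge0.
have F : (1 - t) * BhatP C d w delta 0 <= (1 - t) * BhatP C d w delta (t *: xi).
  by rewrite ler_wpM2l // subr_ge0 ltW.
have E : BhatP C d w delta (t *: xi) - (1 - t) * BhatP C d w delta (t *: xi)
   = t * BhatP C d w delta (t *: xi) by ring.
have : t * BhatP C d w delta (t *: xi) < t * BhatP C d w delta xi by lra.
by rewrite ltr_pM2l.
Qed.

Lemma diff_le (R : realType) (a b z : R) : 0 < a -> a <= b -> 0 <= z ->
  `|Bhat a z - Bhat b z| <= 2 * (b / a - 1).
Proof.
move=> a0 ab z0.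
have b0 : 0 < b := lt_le_trans a0 ab.
have u0 : 0 <= b / a - 1 by rewrite subr_ge0 ler_pdivlMr // mul1r.
rewrite ler_norml /Bhat.
case: (ltP a z) => az; case: (ltP b z) => bz.
- by rewrite subrr; lra.
-
  have zp : 0 < z := lt_trans a0 az.
  have hl : ln z <= ln b by rewrite ler_ln ?posrE.
  have hu := @ln_tan_le _ z b zp b0.
  pose v := z / b.
  have v1 : v <= 1 by rewrite /v ler_pdivrMr // mul1r.
  have E : 2^-1 * (((z - 2 * b) / b) ^+ 2 - 1) = 2^-1 * ((1 - v) * (3 - v)) by rewrite /v; field; rewrite gt_eqF.
  have bza : b / z <= b / a.
    by rewrite ler_pM2l // lef_pV2 ?posrE // ltW.
  have av : a / b <= v by rewrite /v ler_pM2r ?invr_gt0 // ltW.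
  have amgm : 1 - a / b <= b / a - 1.
    rewrite -subr_ge0.
    have -> : b / a - 1 - (1 - a / b) = (b - a) ^+ 2 / (a * b) by field; rewrite ?gt_eqF.
    by rewrite divr_ge0 ?sqr_ge0 // mulr_ge0 // ltW.
  have v0 : 0 <= v by rewrite /v divr_ge0 // ltW.
  have P1 : 0 <= (1 - v) * (3 - v) by apply: mulr_ge0; lra.
  have P2 : (1 - v) * (3 - v) <= 3 * (1 - v).
    by rewrite [X in X <= _]mulrC; apply: ler_wpM2r; lra.
  rewrite E; lra.
- by have := le_lt_trans (le_trans az ab) bz; rewrite ltxx.
-
  have hl : ln a <= ln b by rewrite ler_ln ?posrE.
  have hu := @ln_tan_le _ a b a0 b0.
  pose p := z / b * ((b - a) / a).
  pose s := z / a + z / b - 4.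
  have E : 2^-1 * (((z - 2 * a) / a) ^+ 2 - 1) - ln a - (2^-1 * (((z - 2 * b) / b) ^+ 2 - 1) - ln b)
    = 2^-1 * (p * s) + (ln b - ln a).
    by rewrite /p /s; field; rewrite ?gt_eqF.
  have za1 : z / a <= 1 by rewrite ler_pdivrMr // mul1r.
  have zb1 : z / b <= 1 by rewrite ler_pdivrMr // mul1r (le_trans az).
  have za0 : 0 <= z / a by rewrite divr_ge0 // ltW.
  have zb0 : 0 <= z / b by rewrite divr_ge0 // ltW.
  have ba : (b - a) / a = b / a - 1 by field; rewrite gt_eqF.
  have p0 : 0 <= p by rewrite /p mulr_ge0 // ba.
  have pu : p <= b / a - 1 by rewrite /p ba -[X in _ <= X]mul1r ler_wpM2r.
  have h1 : 0 <= p * s + 4 * p.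
    have -> : p * s + 4 * p = p * (z / a + z / b) by rewrite /s; ring.
    by rewrite mulr_ge0 // addr_ge0.
  have h2 : p * s <= 0 by rewrite mulr_ge0_le0 // /s; lra.
  rewrite E; lra.
Qed.

Lemma cont_crit (R : realType) (A : set R) (f : R -> R) :
  (forall x, A x -> forall e, 0 < e -> exists2 eta, 0 < eta & forall y, A y -> `|y - x| < eta -> `|f x - f y| <= e) ->
  {within A, continuous f}.
Proof.
move=> H; apply/subspace_continuousP => x Ax.
apply/cvgrPdist_le => e e0.
have [eta eta0 Heta] := H x Ax e e0.
rewrite /within /=.
apply/nbhs_ballP; exists eta => //= y.
rewrite /ball /= => hb Ay; apply: Heta => //; rewrite distrC; exact: hb.
Qed.

Lemma diff_le2 (R : realType) (a b m z : R) : 0 < m -> m <= a -> m <= b -> 0 <= z ->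
  `|Bhat a z - Bhat b z| <= 2 * `|b - a| / m.
Proof.
wlog ab : a b / a <= b.
  move=> W m0 ma mb z0; case: (leP a b) => h; first exact: W.
  by rewrite distrC (distrC b a); apply: W => //; exact: ltW.
move=> m0 ma mb z0.
have a0 : 0 < a := lt_le_trans m0 ma.
apply: le_trans (@diff_le _ a b z a0 ab z0) _.
rewrite ger0_norm ?subr_ge0 //.
have h : (b - a) / a <= (b - a) / m.
  by rewrite ler_wpM2l ?subr_ge0 // lef_pV2 ?posrE.
have -> : 2 * (b / a - 1) = 2 * ((b - a) / a) by field; rewrite gt_eqF.
rewrite -mulrA; lra.
Qed.

Lemma BhatP_diff (R : realType) (q r : nat) (C : 'M[R]_(q, r)) (d w : 'cV[R]_q) (a b m : R)
  (eta : 'cV[R]_r) :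
  (forall i, 0 <= w i 0) -> 0 < m -> m <= a -> m <= b -> polytope C d eta ->
  `|BhatP C d w a eta - BhatP C d w b eta| <= (\sum_(i < q) (1 + w i 0)) * (2 * `|b - a| / m).
Proof.
move=> wp m0 ma mb hP.
rewrite /BhatP -sumrB mulr_suml.
apply: le_trans; first exact: ler_norm_sum.
apply: ler_sum => i _.
set z := - (C *m eta) i 0 + d i 0.
rewrite -mulrBr normrM ger0_norm ?addr_ge0 // ler_wpM2l ?addr_ge0 //.
have -> : Bhat a z + ln (d i 0) - (Bhat b z + ln (d i 0)) = Bhat a z - Bhat b z by ring.
apply: diff_le2 => //.
by have := hP i; rewrite /z; lra.
Qed.

Lemma bb_lb (R : realType) (q r : nat) (C : 'M[R]_(q, r)) (d w : 'cV[R]_q) (delta : R)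
  (eta : 'cV[R]_r) :
  (forall i, 0 < d i 0) -> (forall i, 0 <= w i 0) ->
  C^T *m diag_mx (\row_i (d i 0)^-1) *m (const_mx 1 + w) = 0 ->
  0 < delta -> (forall i, delta <= d i 0) ->
  (exists j, (C *m eta) j 0 = d j 0) -> betabar C d w delta <= BhatP C d w delta eta.
Proof.
move=> dp wp H d0 dd Se; rewrite /betabar; apply: ge_inf; last by exists eta.
exists (BhatP C d w delta 0) => y [xi _ <-]; exact: glob_min.
Qed.

Lemma bb_le (R : realType) (q r : nat) (C : 'M[R]_(q, r)) (d w : 'cV[R]_q) (a b m : R) :
  (forall i, 0 < d i 0) -> (forall i, 0 <= w i 0) ->
  C^T *m diag_mx (\row_i (d i 0)^-1) *m (const_mx 1 + w) = 0 ->
  delta_range d a -> delta_range d b -> 0 < m -> m <= a -> m <= b ->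
  betabar C d w b <= betabar C d w a + (\sum_(i < q) (1 + w i 0)) * (2 * `|b - a| / m).
Proof.
move=> dp wp H [a0 ad] [b0 bd] m0 ma mb.
have K0 : 0 <= (\sum_(i < q) (1 + w i 0)) * (2 * `|b - a| / m).
  apply: mulr_ge0; first by apply: sumr_ge0 => i _; rewrite addr_ge0.
  by rewrite divr_ge0 ?mulr_ge0 // ltW.
case: (pselect (exists xi : 'cV[R]_r, exists i : 'I_q, (C *m xi) i 0 = d i 0))
  => [[xi0 Sxi0]|nS]; last first.
  have E : forall delta, betabar C d w delta = 0.
    move=> delta; rewrite /betabar.
    have -> : [set BhatP C d w delta xi | xi in
        [set xi : 'cV[R]_r | exists i : 'I_q, (C *m xi) i 0 = d i 0]] = set0.
      by apply/seteqP; split => y // [xi Sxi _]; apply: nS; exists xi.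
    exact: inf0.
  by rewrite !E add0r.
rewrite -lerBlDr {1}/betabar; apply: lb_le_inf.
  by exists (BhatP C d w a xi0), xi0.
move=> y [xi Sxi <-].
have [eta [Seta [Peta le]]] : exists eta, (exists j, (C *m eta) j 0 = d j 0) /\
    polytope C d eta /\ BhatP C d w a eta <= BhatP C d w a xi.
  case: (pselect (polytope C d xi)) => hp; first by exists xi.
  have [eta [Se [Pe lt]]] := @core _ _ _ C d w a xi dp wp a0 ad H hp.
  by exists eta; split => //; split => //; exact: ltW.
have h1 := @bb_lb _ _ _ C d w b eta dp wp H b0 bd Seta.
have h2 := @BhatP_diff _ _ _ C d w a b m eta wp m0 ma mb Peta.
rewrite ler_norml in h2; move/andP: h2 => [h2 h3].
lra.
Qed.

Theorem lemma2 (R : realType) (q r : nat) (C : 'M[R]_(q, r)) (d w : 'cV[R]_q) :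
  compact (polytope C d) ->
  (forall i : 'I_q, 0 < d i 0) ->
  (forall i : 'I_q, 0 <= w i 0) ->
  C^T *m diag_mx (\row_i (d i 0)^-1) *m (const_mx 1 + w) = 0 ->
  {within delta_range d, continuous (betabar C d w)} /\
  (forall delta : R, delta_range d delta ->
     [set xi : 'cV[R]_r | BhatP C d w delta xi <= betabar C d w delta]
       `<=` polytope C d).
Proof.
move=> _ dp wp H; split.
  apply: cont_crit => x [x0 xd] e e0.
  set K := \sum_(i < q) (1 + w i 0).
  have K0 : 0 <= K by apply: sumr_ge0 => i _; rewrite addr_ge0.
  pose m := x / 2.
  have m0 : 0 < m by rewrite divr_gt0.
  have K1 : 0 < 2 * K + 1 by lra.
  have eta0 : 0 < e * m / (2 * K + 1) by rewrite divr_gt0 ?mulr_gt0.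
  exists (Num.min m (e * m / (2 * K + 1))); first by rewrite lt_min m0 eta0.
  move=> y [y0 yd]; rewrite lt_min => /andP [hm he].
  have mx : m <= x by rewrite /m; lra.
  have my : m <= y.
    rewrite distrC in hm; have := ltr_distlBl hm; rewrite /m; lra.
  have h1 := @bb_le _ _ _ C d w x y m dp wp H (conj x0 xd) (conj y0 yd) m0 mx my.
  have h2 := @bb_le _ _ _ C d w y x m dp wp H (conj y0 yd) (conj x0 xd) m0 my mx.
  rewrite -/K distrC in h2; rewrite -/K in h1.
  have t0 : 0 <= `|y - x| := normr_ge0 _.
  have ht : `|y - x| * (2 * K + 1) <= e * m by rewrite -ler_pdivlMr // ltW.
  have hK : K * (2 * `|y - x| / m) <= e.
    rewrite mulrA ler_pdivrMr //.
    have -> : K * (2 * `|y - x|) = 2 * (K * `|y - x|) by ring.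
    have : K * `|y - x| = `|y - x| * K by ring.
    have : `|y - x| * (2 * K + 1) = 2 * (`|y - x| * K) + `|y - x| by ring.
    lra.
  rewrite ler_norml; apply/andP; split; lra.
move=> delta [d0 dd] xi /= hle.
case: (pselect (polytope C d xi)) => // hp; exfalso.
have [eta [Se [Pe lt]]] := @core _ _ _ C d w delta xi dp wp d0 dd H hp.
have := @bb_lb _ _ _ C d w delta eta dp wp H d0 dd Se.
lra.
Qed.
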